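(* Let $p$ be a prime, $a,b,c\in\mathbb{Z}_p$ with $a\neq 0$, and $P(x,y)=a+bx+cy$. Then $(\mathbb{Z}_p,* )$ with $x*y=P(x,y)$ is a quasigroup with the cross inverse property if and only if $bc\equiv 1\pmod p$.
   Context: $\mathbb{Z}_p$ is the field of integers modulo $p$. A groupoid $(G,\cdot)$ is a quasigroup if for all $u,v\in G$ the equations $u\cdot x=v$ and $y\cdot u=v$ have unique solutions. In a quasigroup, for each $x$ let $e_\rho(x)$ be the unique element with $x\cdot e_\rho(x)=x$, and $x^\rho$ the unique element with $x\cdot x^\rho=e_\rho(x)$. The cross inverse property means $(x\cdot y)\cdot x^\rho=y$ for all $x,y$. *)

(* Defs.v *)
From mathcomp Require Import all_boot all_algebra.
Set Implicit Arguments. Unset Strict Implicit. Unset Printing Implicit Defensive.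

Definition is_quasigroup (G : Type) (op : G -> G -> G) : Prop :=
  forall u v : G, (exists! x, op u x = v) /\ (exists! y, op y u = v).

(* Cross inverse property: (x*y)*x^rho = y, where e_rho(x) is the (unique, in a
   quasigroup) e with x*e = x, and x^rho the (unique) r with x*r = e_rho(x).
   Phrased by quantifying over these uniquely determined elements. *)
Definition cross_inverse (G : Type) (op : G -> G -> G) : Prop :=
  forall x e r : G, op x e = x -> op x r = e -> forall y : G, op (op x y) r = y.

(* Main.v *)
Require Import Defs.
From mathcomp Require Import all_boot all_algebra.
From mathcomp Require Import ring.
Import GRing.Theory.
Local Open Scope ring_scope.

Theorem mainTheorem16 (p : nat) (hp : prime p) (a b c : 'F_p) (ha : a != 0) :
  (is_quasigroup (fun x y : 'F_p => a + b * x + c * y) /\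
   cross_inverse (fun x y : 'F_p => a + b * x + c * y))
  <-> b * c = 1.
Proof.
split.
- move=> [Q C].
  have [[e [He _]] _] := Q 0 0.
  have [[r [Hr _]] _] := Q 0 e.
  have H0 := C 0 e r He Hr 0.
  have H1 := C 0 e r He Hr 1.
  have : b * c = (a + b * (a + b * 0 + c * 1) + c * r)
                 - (a + b * (a + b * 0 + c * 0) + c * r) by ring.
  by rewrite H1 H0 subr0.
- move=> bc; split.
  + move=> u v; split.
    * exists (b * (v - a - b * u)); split.
        transitivity (a + b * u + (b * c) * (v - a - b * u)); first by ring.
        by rewrite bc mul1r; ring.
      move=> x' H; symmetry.
      transitivity ((b * c) * x'); first by rewrite bc mul1r.
      by rewrite -H; ring.
    * exists (c * (v - a - c * u)); split.
        transitivity (a + (b * c) * (v - a - c * u) + c * u); first by ring.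
        by rewrite bc mul1r; ring.
      move=> y' H; symmetry.
      transitivity ((b * c) * y'); first by rewrite bc mul1r.
      by rewrite -H; ring.
  + move=> x e r He Hr y.
    transitivity ((b * c) * y + (a + b * x + c * r - e) + (e - (b * c) * e)
                  + b * (a + b * x + c * e - x)); first by ring.
    rewrite Hr He bc; ring.
Qed.
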